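(* Let $p\ge 2$, let $\boldsymbol{S}$ be a $p\times p$ symmetric positive semidefinite matrix, let $\rho>0$, and let $k$ be an integer with $0\le k\le \binom{p}{2}$. For positive definite $\boldsymbol{\Sigma}$ put $f(\boldsymbol{\Sigma})=\ln\det\boldsymbol{\Sigma}+\mathrm{tr}(\boldsymbol{\Sigma}^{-1}\boldsymbol{S})$ and $h_\rho(\boldsymbol{\Sigma})=f(\boldsymbol{\Sigma})+\frac{\rho}{2}\mathrm{dist}(\boldsymbol{\Sigma},\mathcal{C})^2$, where $\mathcal{C}=\{\boldsymbol{A}\in\mathbb{R}^{p\times p}:\boldsymbol{A}=\boldsymbol{A}^T,\ \|\boldsymbol{A}\|_0\le 2k+p\}$ and $\mathrm{dist}$ is Frobenius distance. Let $\boldsymbol{\Sigma}_k\succ\boldsymbol{0}$, let $\boldsymbol{\Theta}_k\in P_{\mathcal{C}}(\boldsymbol{\Sigma}_k)$, and let $\widehat{\boldsymbol{\Sigma}}$ be the unique solution of the Sylvester equation $$\rho\,\widehat{\boldsymbol{\Sigma}}+\boldsymbol{\Sigma}_k^{-1}\widehat{\boldsymbol{\Sigma}}\boldsymbol{\Sigma}_k^{-1}=\rho\,\boldsymbol{\Theta}_k+\boldsymbol{\Sigma}_k^{-1}\boldsymbol{S}\boldsymbol{\Sigma}_k^{-1}.$$ If $\boldsymbol{\Sigma}_k$ is not a stationary point of $h_\rho$, then there exists an integer $s\ge 0$ such that $\boldsymbol{\Sigma}_{k+1}=\boldsymbol{\Sigma}_k+2^{-s}(\widehat{\boldsymbol{\Sigma}}-\boldsymbol{\Sigma}_k)$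 satisfies $\boldsymbol{\Sigma}_{k+1}\succ\boldsymbol{0}$ and $h_\rho(\boldsymbol{\Sigma}_{k+1})<h_\rho(\boldsymbol{\Sigma}_k)$.
   Context: $\|\boldsymbol{A}\|_0$ is the number of nonzero entries of $\boldsymbol{A}$. $P_{\mathcal{C}}(\boldsymbol{\Sigma})$ denotes the (possibly multi-valued) set of Frobenius-nearest points of $\mathcal{C}$ to $\boldsymbol{\Sigma}$ (obtained by keeping the diagonal and the $k$ largest-magnitude upper-triangular entries, mirrored symmetrically, and zeroing the rest). $\widehat{\boldsymbol{\Sigma}}$ is the minimizer of the quadratic surrogate $q_\rho(\boldsymbol{\Sigma}\mid\boldsymbol{\Sigma}_k)=f(\boldsymbol{\Sigma}_k)+\mathrm{tr}[\boldsymbol{\Sigma}_k^{-1}(\boldsymbol{\Sigma}-\boldsymbol{\Sigma}_k)]-\mathrm{tr}[\boldsymbol{\Sigma}_k^{-1}\boldsymbol{S}\boldsymbol{\Sigma}_k^{-1}(\boldsymbol{\Sigma}-\boldsymbol{\Sigma}_k)]+\frac12\mathrm{tr}[\boldsymbol{\Sigma}_k^{-1}(\boldsymbol{\Sigma}-\boldsymbol{\Sigma}_k)\boldsymbol{\Sigma}_k^{-1}(\boldsymbol{\Sigma}-\boldsymbol{\Sigma}_k)]+\frac{\rho}{2}\|\boldsymbol{\Sigma}-\boldsymbol{\Theta}_k\|_F^2$. A positive definite $\boldsymbol{\Sigma}$ is called a stationary point of $h_\rho$ if $\boldsymbol{\Sigma}^{-1}-\boldsymbol{\Sigma}^{-1}\boldsymbol{S}\boldsymbol{\Sigma}^{-1}+\rho(\boldsymbol{\Sigma}-\boldsymbol{\Theta})=\boldsymbol{0}$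 for some $\boldsymbol{\Theta}\in P_{\mathcal{C}}(\boldsymbol{\Sigma})$. *)

(* Defs.v *)
From HB Require Import structures.
From mathcomp Require Import all_boot all_order all_algebra.
From mathcomp Require Import all_classical all_reals all_analysis.
Set Implicit Arguments. Unset Strict Implicit. Unset Printing Implicit Defensive.
Import Order.TTheory GRing.Theory Num.Theory.
Local Open Scope ring_scope.
Local Open Scope classical_set_scope.

Section Defs.
Variable R : realType.
Variable p : nat.

Definition posdef (A : 'M[R]_p) : Prop :=
  A^T = A /\ forall x : 'cV[R]_p, x != 0 -> 0 < (x^T *m A *m x) 0 0.

Definition psd (A : 'M[R]_p) : Prop :=
  A^T = A /\ forall x : 'cV[R]_p, 0 <= (x^T *m A *m x) 0 0.

Definition nnz (A : 'M[R]_p) : nat :=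
  #|[set ij : 'I_p * 'I_p | A ij.1 ij.2 != 0]|.

Definition frob2 (A : 'M[R]_p) : R := \sum_i \sum_j (A i j) ^+ 2.
Definition frob (A : 'M[R]_p) : R := Num.sqrt (frob2 A).

Definition Cset (k : nat) : set 'M[R]_p :=
  [set A | A^T = A /\ (nnz A <= 2 * k + p)%N].

Definition distC (k : nat) (Sg : 'M[R]_p) : R :=
  inf [set frob (Sg - A) | A in Cset k].

Definition projC (k : nat) (Sg : 'M[R]_p) : set 'M[R]_p :=
  [set T | Cset k T /\ forall A, Cset k A -> frob (Sg - T) <= frob (Sg - A)].

Definition fobj (S Sg : 'M[R]_p) : R := ln (\det Sg) + \tr (invmx Sg *m S).

Definition hrho (k : nat) (rho : R) (S Sg : 'M[R]_p) : R :=
  fobj S Sg + rho / 2 * (distC k Sg) ^+ 2.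

Definition stationary (k : nat) (rho : R) (S Sg : 'M[R]_p) : Prop :=
  posdef Sg /\ exists T, projC k Sg T /\
    invmx Sg - invmx Sg *m S *m invmx Sg + rho *: (Sg - T) = 0.
End Defs.

(* Main.v *)
Require Import Defs.
From HB Require Import structures.
From mathcomp Require Import all_boot all_order all_algebra.
From mathcomp Require Import all_classical all_reals all_analysis.
From mathcomp Require Import ring lra zify.
Set Implicit Arguments. Unset Strict Implicit. Unset Printing Implicit Defensive.
Import Order.TTheory GRing.Theory Num.Theory.
Local Open Scope ring_scope.
Section Aux.
Variable R : realType.
Variable n : nat.
Implicit Types (A B : 'M[R]_n) (x y z : 'cV[R]_n).

Definition bf A (x y : 'cV[R]_n) : R := (x^T *m A *m y) 0 0.
Definition sq (x : 'cV[R]_n) : R := \sum_i x i 0 ^+ 2.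

Lemma mx11M (a b : 'M[R]_1) : (a *m b) 0 0 = a 0 0 * b 0 0.
Proof. by rewrite mxE big_ord1. Qed.

Lemma bf_sym A x y : A^T = A -> bf A x y = bf A y x.
Proof.
move=> sA; rewrite /bf -[in LHS](trmxK (x^T *m A *m y)) mxE.
by rewrite !trmx_mul trmxK sA mulmxA.
Qed.

Lemma bfDl A x y z : bf A (x + y) z = bf A x z + bf A y z.
Proof. by rewrite /bf linearD /= !mulmxDl mxE. Qed.
Lemma bfDr A x y z : bf A z (x + y) = bf A z x + bf A z y.
Proof. by rewrite /bf !mulmxDr mxE. Qed.
Lemma bfZl A a x z : bf A (a *: x) z = a * bf A x z.
Proof. by rewrite /bf linearZ /= -!scalemxAl mxE. Qed.
Lemma bfZr A a x z : bf A z (a *: x) = a * bf A z x.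
Proof. by rewrite /bf -!scalemxAr mxE. Qed.
Lemma bfNl A x z : bf A (- x) z = - bf A x z.
Proof. by rewrite -scaleN1r bfZl mulN1r. Qed.
Lemma bfDA A B x z : bf (A + B) x z = bf A x z + bf B x z.
Proof. by rewrite /bf mulmxDr mulmxDl mxE. Qed.
Lemma bfZA A a x z : bf (a *: A) x z = a * bf A x z.
Proof. by rewrite /bf -scalemxAr -scalemxAl mxE. Qed.
Lemma bfNA A x z : bf (- A) x z = - bf A x z.
Proof. by rewrite -scaleN1r bfZA mulN1r. Qed.

Lemma bf_delta A i j : bf A (delta_mx i 0) (delta_mx j 0) = A i j.
Proof.
by rewrite /bf trmx_delta -rowE -colE !mxE.
Qed.

Lemma bf1 x : bf 1%:M x x = sq x.
Proof.
rewrite /bf mulmx1 mxE; apply: eq_bigr => i _; by rewrite mxE expr2.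
Qed.

Lemma sq_ge0 x : 0 <= sq x.
Proof. by apply: sumr_ge0 => i _; rewrite sqr_ge0. Qed.

Lemma sq_entry x i : x i 0 ^+ 2 <= sq x.
Proof.
rewrite /sq (bigD1 i) //= lerDl; apply: sumr_ge0 => j _; exact: sqr_ge0.
Qed.

Lemma sq_eq0 x : sq x = 0 -> x = 0.
Proof.
move=> h; apply/matrixP => i j; rewrite (ord1 j) mxE.
have H : x i 0 ^+ 2 = 0.
  by apply: (psumr_eq0P _ h) => // k _; exact: sqr_ge0.
by move/eqP: H; rewrite sqrf_eq0 => /eqP.
Qed.

Lemma diag0_row0 A i j : A^T = A -> (forall x, 0 <= bf A x x) -> A i i = 0 -> A i j = 0.
Proof.
move=> sA pA Aii.
set a := A i j; set d := A j j.
have d0 : 0 <= d by rewrite /d -bf_delta.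
set l := - a / (d + 1).
have := pA (delta_mx i 0 + l *: delta_mx j 0).
rewrite !(bfDl, bfDr, bfZl, bfZr, bf_delta) -/d Aii.
idtac => h.
have d1 : 0 < d + 1 by lra.
have aji : A j i = a by rewrite /a -{1}sA mxE.
rewrite aji -/a add0r in h.
have hl : l * (d + 1) = - a by rewrite /l mulrVK // unitfE gt_eqF.
have e : (d + 1) ^+ 2 * (l * a + (l * a + l * (l * d))) = - (a ^+ 2) * (d + 2).
  have -> : (d + 1) ^+ 2 * (l * a + (l * a + l * (l * d))) =
     2 * a * (l * (d + 1)) * (d + 1) + d * (l * (d + 1)) ^+ 2 by ring.
  rewrite hl; ring.
have h2 : 0 <= - (a ^+ 2) * (d + 2).
  rewrite -e; apply: mulr_ge0 => //; exact: sqr_ge0.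
have h3 : a ^+ 2 <= 0 by nra.
apply/eqP; rewrite -sqrf_eq0 eq_le h3 sqr_ge0 //.
Qed.
End Aux.

Section Decomp.
Variable R : realType.
Variable n : nat.
Implicit Types (A B : 'M[R]_n) (x y z : 'cV[R]_n).

Lemma bfNr A x z : bf A z (- x) = - bf A z x.
Proof. by rewrite -scaleN1r bfZr mulN1r. Qed.

Lemma alldiag0 A : A^T = A -> (forall x, 0 <= bf A x x) ->
  (forall i, A i i = 0) -> A = 0.
Proof.
move=> sA pA h; apply/matrixP => i j; rewrite mxE; exact: diag0_row0.
Qed.

Lemma decomp_aux (m : nat) A : A^T = A -> (forall x, 0 <= bf A x x) ->
  (#|[set i | A i i != 0%R]| <= m)%N ->
  exists B : 'M[R]_n, A = B^T *m B /\ (forall j, A j j = 0 -> row j B = 0).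
Proof.
elim: m A => [|m IH] A sA pA hc.
  have A0 : A = 0.
    apply: alldiag0 => // i; apply/eqP; apply: contraTT hc => h.
    by rewrite -ltnNge card_gt0; apply/set0Pn; exists i; rewrite inE.
  exists 0; rewrite A0 trmx0 mul0mx; split => // j _.
  by apply/matrixP => ? ?; rewrite !mxE.
case: (pickP (fun i => A i i != 0)) => [i /= ai0 | hall]; last first.
  have A0 : A = 0.
    by apply: alldiag0 => // i; apply/eqP; move: (hall i) => /= /negbFE.
  exists 0; rewrite A0 trmx0 mul0mx; split => // j _.
  by apply/matrixP => ? ?; rewrite !mxE.
set a := A i i.
have a0 : 0 < a by rewrite lt_def ai0 /a -bf_delta pA.
set c := col i A.
set A' := A - a^-1 *: (c *m c^T).
have eA' : forall j k, A' j k = A j k - a^-1 * (A j i * A k i).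
  by move=> j k; rewrite !mxE big_ord1 !mxE.
have sA' : A'^T = A'.
  by rewrite /A' linearB /= linearZ /= trmx_mul trmxK sA.
have bfc : forall x, bf (c *m c^T) x x = (bf A x (delta_mx i 0)) ^+ 2.
  move=> x; rewrite /bf -!mulmxA mulmxA mx11M.
  have -> : c^T *m x = (x^T *m c)^T by rewrite trmx_mul trmxK.
  by rewrite [(_^T) 0 0]mxE /c colE mulmxA expr2.
have pA' : forall x, 0 <= bf A' x x.
  move=> x; set b := bf A x (delta_mx i 0).
  have := pA (x - (b / a) *: delta_mx i 0).
  rewrite !(bfDl, bfDr, bfNl, bfNr, bfZl, bfZr, bf_delta) -/a.
  rewrite (bf_sym (delta_mx i 0) x sA) -/b => h.
  rewrite /A' bfDA bfNA bfZA bfc -/b.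
  have e : b / a * a = b by rewrite mulrVK // unitfE gt_eqF.
  have -> : a^-1 * b ^+ 2 = b / a * b by ring.
  rewrite e mulrN opprK in h; lra.
have A'ii : A' i i = 0.
  by rewrite eA' -/a mulKf ?gt_eqF // subrr.
have A'jj : forall j, A j j = 0 -> A' j j = 0.
  move=> j Ajj; rewrite eA' Ajj (diag0_row0 i sA pA Ajj) mul0r mulr0 subrr //.
have hc' : (#|[set j | A' j j != 0%R]| <= m)%N.
  have : [set j | A' j j != 0] \proper [set j | A j j != 0].
    apply/properP; split.
      apply/fintype.subsetP => j; rewrite !inE; apply: contra => /eqP/A'jj ->; done.
    by exists i; rewrite !inE ?A'ii ?eqxx.
  move/proper_card => h; rewrite -ltnS; exact: leq_trans h hc.
have [B' [eB' rB']] := IH A' sA' pA' hc'.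
set s := Num.sqrt a.
have s0 : 0 < s by rewrite sqrtr_gt0.
have ss : s ^+ 2 = a by rewrite sqr_sqrtr // ltW.
set X := s^-1 *: c^T.
have r0 : (delta_mx i 0 : 'cV[R]_n)^T *m B' = 0.
  by rewrite trmx_delta -rowE rB'.
exists (B' + (delta_mx i 0 : 'cV[R]_n) *m X); split.
  rewrite [(_ + _)^T]raddfD /= mulmxDl !mulmxDr -eB'.
  have r1 : B'^T *m (delta_mx i 0 : 'cV[R]_n) = 0.
    by rewrite -[delta_mx i 0]trmxK -trmx_mul r0 trmx0.
  have dd : (delta_mx i 0 : 'cV[R]_n)^T *m (delta_mx i 0 : 'cV[R]_n) = 1%:M.
    rewrite trmx_delta mul_delta_mx.
    by apply/matrixP => p q; rewrite (ord1 p) (ord1 q) !mxE.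
  rewrite !trmx_mul mulmxA r1 mul0mx addr0 -mulmxA r0 mulmx0 add0r.
  rewrite (mulmxA (X^T *m _)) -(mulmxA X^T) dd mulmx1.
  rewrite /X [(s^-1 *: _)^T]linearZ /= trmxK -scalemxAl -scalemxAr scalerA.
  by rewrite /A' -invfM -expr2 ss subrK.
move=> j Ajj; rewrite linearD /= row_mul (rB' j (A'jj j Ajj)) add0r.
have -> : row j (delta_mx i 0 : 'cV[R]_n) = 0.
  apply/matrixP => p q; rewrite !mxE.
  case: eqP => // ji; subst j; by move: ai0; rewrite /a Ajj eqxx.
by rewrite mul0mx.
Qed.

Lemma decomp A : A^T = A -> (forall x, 0 <= bf A x x) ->
  exists B : 'M[R]_n, A = B^T *m B.
Proof.
move=> sA pA; have [B [eB _]] := decomp_aux sA pA (leqnn _); by exists B.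
Qed.
End Decomp.

Section PD.
Variable R : realType.
Variable n : nat.
Implicit Types (A B C X Y : 'M[R]_n) (x y z : 'cV[R]_n).

Lemma posdef_unit A : posdef A -> A \in unitmx.
Proof.
case=> sA pA; rewrite unitmxE unitfE; apply/negP => /det0P [v vn0 vA].
have := pA v^T; rewrite trmx_eq0 => /(_ vn0); rewrite trmxK vA mul0mx mxE ltxx.
done.
Qed.

Lemma posdef_inv A : posdef A -> posdef (invmx A).
Proof.
move=> pdA; have uA := posdef_unit pdA; case: pdA => sA pA; split.
  by rewrite trmx_inv sA.
move=> x xn0; set y := invmx A *m x.
have ex : x = A *m y by rewrite /y mulKVmx.
have yn0 : y != 0.
  by apply: contraNneq xn0 => y0; rewrite ex y0 mulmx0.
rewrite ex trmx_mul sA -!mulmxA (mulmxA (invmx A)) mulVmx // mul1mx mulmxA.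
exact: pA.
Qed.

Lemma posdef_bf A : posdef A -> forall x, 0 <= bf A x x.
Proof.
case=> sA pA x; have [->|xn0] := eqVneq x 0.
  by rewrite /bf mulmx0 mxE.
exact/ltW/pA.
Qed.

Lemma posdef_decomp A : posdef A -> exists B, A = B^T *m B /\ B \in unitmx.
Proof.
move=> pdA; have [B eB] := decomp (proj1 pdA) (posdef_bf pdA).
exists B; split => //; have := posdef_unit pdA.
by rewrite eB unitmx_mul unitmx_tr andbb.
Qed.

Lemma det_posdef A : posdef A -> 0 < \det A.
Proof.
move=> pdA; have [B [eB uB]] := posdef_decomp pdA.
rewrite eB det_mulmx det_tr -expr2 lt_def sqr_ge0 andbT sqrf_eq0.
by move: uB; rewrite unitmxE unitfE.
Qed.

Lemma tr_sq Y : \tr (Y^T *m Y) = \sum_i \sum_j Y i j ^+ 2.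
Proof.
rewrite /mxtrace exchange_big; apply: eq_bigr => i _; rewrite mxE.
by apply: eq_bigr => j _; rewrite mxE expr2.
Qed.

Lemma frob2_tr Y : frob2 Y = \tr (Y^T *m Y).
Proof. by rewrite tr_sq. Qed.

Lemma tr_sq_ge0 Y : 0 <= \tr (Y^T *m Y).
Proof.
by rewrite tr_sq; apply: sumr_ge0 => i _; apply: sumr_ge0 => j _; exact: sqr_ge0.
Qed.

Lemma tr_sq_eq0 Y : \tr (Y^T *m Y) = 0 -> Y = 0.
Proof.
rewrite tr_sq => h; apply/matrixP => i j; rewrite mxE.
have h1 : \sum_j Y i j ^+ 2 = 0.
  apply: (psumr_eq0P _ h) => // k _; apply: sumr_ge0 => l _; exact: sqr_ge0.
have h2 : Y i j ^+ 2 = 0 by apply: (psumr_eq0P _ h1) => // k _; exact: sqr_ge0.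
by move/eqP: h2; rewrite sqrf_eq0 => /eqP.
Qed.

Lemma tr_quad_ge0 X C : 0 <= \tr (X^T *m (C^T *m C) *m X *m (C^T *m C)).
Proof.
have -> : X^T *m (C^T *m C) *m X *m (C^T *m C)
   = (X^T *m C^T) *m (C *m X *m C^T *m C) by rewrite !mulmxA.
rewrite mxtrace_mulC.
have -> : C *m X *m C^T *m C *m (X^T *m C^T)
   = (C *m X *m C^T) *m (C *m X *m C^T)^T by rewrite !trmx_mul trmxK !mulmxA.
rewrite mxtrace_mulC; exact: tr_sq_ge0.
Qed.
End PD.

Section Bounds.
Variable R : realType.
Variable n : nat.
Implicit Types (A B C E X Y Z : 'M[R]_n) (x y z u : 'cV[R]_n).

Definition Kn E : R := \sum_i \sum_j `|E i j|.

Lemma Kn_ge0 E : 0 <= Kn E.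
Proof. by apply: sumr_ge0 => i _; apply: sumr_ge0 => j _. Qed.

Lemma bfE E u : bf E u u = \sum_k \sum_j u j 0 * E j k * u k 0.
Proof.
rewrite /bf mxE; apply: eq_bigr => k _; rewrite mxE mulr_suml.
by apply: eq_bigr => j _; rewrite mxE.
Qed.

Lemma prod_le_sq u j k : `|u j 0 * u k 0| <= sq u.
Proof.
have e1 := sq_entry u j; have e2 := sq_entry u k.
rewrite normrM.
have h1 : `|u j 0| ^+ 2 = u j 0 ^+ 2 by rewrite real_normK ?num_real.
have h2 : `|u k 0| ^+ 2 = u k 0 ^+ 2 by rewrite real_normK ?num_real.
have := sqr_ge0 (`|u j 0| - `|u k 0|).
nra.
Qed.

Lemma quad_bound E u : `|bf E u u| <= Kn E * sq u.
Proof.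
rewrite bfE; apply: le_trans (ler_norm_sum _ _ _) _.
rewrite /Kn exchange_big mulr_suml; apply: ler_sum => k _.
apply: le_trans (ler_norm_sum _ _ _) _.
rewrite mulr_suml; apply: ler_sum => j _.
rewrite mulrAC normrM mulrC; apply: ler_wpM2l => //.
exact: prod_le_sq.
Qed.

Lemma tr_bound Z X b : (forall i j, `|Z i j| <= b) -> `|\tr (Z *m X)| <= b * Kn X.
Proof.
move=> hb; rewrite /mxtrace; apply: le_trans (ler_norm_sum _ _ _) _.
rewrite /Kn exchange_big mulr_sumr; apply: ler_sum => i _; rewrite mxE.
apply: le_trans (ler_norm_sum _ _ _) _.
rewrite mulr_sumr; apply: ler_sum => j _; rewrite normrM mulrC.
by rewrite [b * _]mulrC; apply: ler_wpM2l.
Qed.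

Lemma Zlem E t : 0 <= t -> t * Kn E <= 1/2 ->
  [/\ forall u, sq u / 2 <= bf (1%:M + t *: E) u u,
      (1%:M + t *: E) \in unitmx &
      forall i j, `|invmx (1%:M + t *: E) i j| <= 2].
Proof.
move=> t0 tK; set M := 1%:M + t *: E.
have hq : forall u, sq u / 2 <= bf M u u.
  move=> u; rewrite /M bfDA bfZA bf1.
  have := quad_bound E u; have := sq_ge0 u; have := Kn_ge0 E.
  rewrite ler_norml => hK hs /andP [hl _].
  have : t * (- (Kn E * sq u)) <= t * bf E u u by apply: ler_wpM2l.
  nra.
have uM : M \in unitmx.
  rewrite unitmxE unitfE; apply/negP => /det0P [v vn0 vM].
  have := hq v^T; rewrite /bf trmxK vM mul0mx mxE => h.
  have : sq v^T = 0 by have := sq_ge0 v^T; lra.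
  by move/sq_eq0/eqP; rewrite trmx_eq0 (negbTE vn0).
split => // i j.
set z := invmx M *m (delta_mx j 0 : 'cV[R]_n).
have Mz : M *m z = (delta_mx j 0 : 'cV[R]_n) by rewrite /z mulKVmx.
have bz : bf M z z = z j 0.
  by rewrite /bf -mulmxA Mz -colE !mxE.
have h := hq z; rewrite bz in h.
have e1 := sq_entry z j; have e2 := sq_entry z i.
have -> : invmx M i j = z i 0 by rewrite /z -colE mxE.
have s0 := sq_ge0 z.
have zj : z j 0 <= 2 by nra.
have zi : z i 0 ^+ 2 <= 4 by nra.
rewrite ler_norml; apply/andP; split; nra.
Qed.
End Bounds.

Section DetExp.
Variable R : realType.

Lemma char_eval n (N : 'M[R]_n) x : (char_poly N).[x] = \det (x%:M - N).
Proof.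
rewrite -horner_evalE /char_poly -det_map_mx; congr (\det _).
apply/matrixP => i j; rewrite !mxE /= horner_evalE.
by rewrite hornerD hornerN hornerMn hornerX hornerC.
Qed.

Lemma texp (t : R) a b : t != 0 -> (a <= b)%N -> t ^+ b * t^-1 ^+ a = t ^+ (b - a).
Proof.
move=> t0 h; rewrite -{1}(subnK h) exprD exprVn -mulrA mulfV ?mulr1 //.
exact: expf_neq0.
Qed.

Definition Kc m (E : 'M[R]_(m.+2)) : R := \sum_(i < m.+1) `|(char_poly (- E))`_i|.

Lemma det_expand m (E : 'M[R]_(m.+2)) t : 0 < t -> t <= 1 ->
  exists r, \det (1%:M + t *: E) = 1 + t * \tr E + t ^+ 2 * r /\ `|r| <= Kc E.
Proof.
move=> t0 t1; have tn0 : t != 0 by rewrite gt_eqF.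
set c := char_poly (- E).
have e1 : 1%:M + t *: E = t *: (t^-1%:M - (- E)).
  by rewrite opprK scalerDr scale_scalar_mx mulfV.
have cmax : c`_(m.+2) = 1.
  have := char_poly_monic (- E); rewrite monicE /lead_coef size_char_poly.
  by move/eqP.
have cm1 : c`_(m.+1) = \tr E by rewrite (char_poly_trace (- E)) // linearN opprK.
exists (\sum_(i < m.+1) c`_i * t ^+ (m - i)); split; last first.
  apply: le_trans (ler_norm_sum _ _ _) _; apply: ler_sum => i _.
  rewrite normrM -[X in _ <= X]mulr1; apply: ler_wpM2l => //.
  rewrite ger0_norm; last by apply: exprn_ge0; exact: ltW.
  by apply: exprn_ile1 => //; exact: ltW.
set rs := (\sum_(i < m.+1) c`_i * t ^+ (m - i)).
rewrite e1 detZ -char_eval horner_coef size_char_poly -/c.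
rewrite big_ord_recr /= big_ord_recr /= cmax cm1 mul1r !mulrDr.
rewrite texp // subnn expr0.
rewrite [t ^+ m.+2 * (_ * _)]mulrCA texp // subSnn expr1.
have -> : t ^+ m.+2 * \sum_(i < m.+1) c`_i * t^-1 ^+ i = t ^+ 2 * rs.
  rewrite /rs mulr_sumr [t ^+ 2 * _]mulr_sumr; apply: eq_bigr => i _.
  have hi : (i <= m)%N by rewrite -ltnS.
  rewrite mulrCA texp //; last by rewrite ltnW // ltnS ltnW.
  rewrite [t ^+ 2 * _]mulrCA -exprD; congr (_ * (_ ^+ _)); lia.
by ring.
Qed.
End DetExp.

Section Helpers.
Variable R : realType.
Variable n : nat.
Implicit Types (A B C D E X Y Z Sg Th : 'M[R]_n) (k : nat) (t : R).

Lemma inv_uniq X Y : X *m Y = 1%:M -> invmx X = Y.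
Proof.
move=> h; have [uX _] := mulmx1_unit h.
by rewrite -[invmx X]mulmx1 -h mulmxA mulVmx // mul1mx.
Qed.

Lemma frob2_ge0 X : 0 <= frob2 X.
Proof. by rewrite frob2_tr tr_sq_ge0. Qed.

Lemma frob_sq X : frob X ^+ 2 = frob2 X.
Proof. by rewrite /frob sqr_sqrtr // frob2_ge0. Qed.

Lemma distC_le k Sg Th : Cset k Th -> distC k Sg <= frob (Sg - Th).
Proof.
move=> hT; rewrite /distC; apply: ge_inf; last by exists Th.
by exists 0 => _ [A _ <-]; exact: sqrtr_ge0.
Qed.

Lemma distC_ge0 k Sg Th : Cset k Th -> 0 <= distC k Sg.
Proof.
move=> hT; rewrite /distC; apply: lb_le_inf.
  by exists (frob (Sg - Th)), Th.
by move=> _ [A _ <-]; exact: sqrtr_ge0.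
Qed.

Lemma distC_eq k Sg Th : projC k Sg Th -> distC k Sg = frob (Sg - Th).
Proof.
case=> hT hmin; apply/eqP; rewrite eq_le distC_le //=.
rewrite /distC; apply: lb_le_inf.
  by exists (frob (Sg - Th)), Th.
by move=> _ [A hA <-]; exact: hmin.
Qed.

Lemma frob2_expand X D t : frob2 (X + t *: D) =
  frob2 X + 2 * t * \tr (X^T *m D) + t ^+ 2 * frob2 D.
Proof.
rewrite !frob2_tr [(_ + _)^T]raddfD /= [(t *: _)^T]linearZ /=.
rewrite mulmxDl !mulmxDr -!scalemxAl -!scalemxAr !mxtraceD !mxtraceZ.

have -> : \tr (D^T *m X) = \tr (X^T *m D).
  by rewrite -mxtrace_tr trmx_mul trmxK.
rewrite expr2; ring.
Qed.
End Helpers.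

Lemma eG_lemma (R : realType) n (rho : R) (A T X Y Z D : 'M[R]_n) :
  rho *: A + rho *: D + (Z + X) = rho *: T + Y ->
  rho *: D + X = - (Z - Y + rho *: (A - T)).
Proof.
move=> h; apply/matrixP => i j; move/matrixP: h => /(_ i j).
rewrite !mxE => h; lra.
Qed.

Unset Implicit Arguments.
Set Strict Implicit.

Theorem proposition2 (R : realType) (p : nat) (S : 'M[R]_p) (rho : R) (k : nat)
  (Sgk Thk Sghat : 'M[R]_p) :
  (2 <= p)%N -> psd S -> 0 < rho -> (k <= 'C(p, 2))%N ->
  posdef Sgk -> projC k Sgk Thk ->
  rho *: Sghat + invmx Sgk *m Sghat *m invmx Sgk
    = rho *: Thk + invmx Sgk *m S *m invmx Sgk ->
  ~ stationary k rho S Sgk ->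
  exists s : nat,
    let Sgk1 := Sgk + (2%:R ^- s) *: (Sghat - Sgk) in
    posdef Sgk1 /\ hrho k rho S Sgk1 < hrho k rho S Sgk.
Proof.
move: S Sgk Thk Sghat; case: p => [|[|m]] S A T Sh p2 psdS rho0 _ pdA projT Syl nstat //.
set Ai := invmx A.
set D := Sh - A.
have uA := posdef_unit pdA.
have pdAi : posdef Ai := posdef_inv pdA.
have sA : A^T = A := proj1 pdA.
have sAi : Ai^T = Ai := proj1 pdAi.
have sS : S^T = S := proj1 psdS.
have sT : T^T = T := proj1 (proj1 projT).
set G := Ai - Ai *m S *m Ai + rho *: (A - T).
have AiAAi : Ai *m A *m Ai = Ai by rewrite /Ai mulVmx // mul1mx.
have eG : rho *: D + Ai *m D *m Ai = - G.
  have hSh : Sh = A + D by rewrite /D addrC subrK.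
  move: Syl; rewrite -/Ai hSh scalerDr mulmxDr mulmxDl AiAAi => h.
  exact: eG_lemma.
have sG : G^T = G.
  rewrite /G [(_ + _)^T]raddfD /= [(_ - _)^T]raddfB /= [(rho *: _)^T]linearZ /=.
  by rewrite [(A - T)^T]raddfB /= !trmx_mul sAi sS sA sT mulmxA.
have [C eC] : exists C : 'M[R]_(m.+2), Ai = C^T *m C.
  have [C [eC _]] := posdef_decomp pdAi; by exists C.
have Dsym : D^T = D.
  set E1 := D - D^T.
  have hE : rho *: E1 + Ai *m E1 *m Ai = 0.
    have eGT : rho *: D^T + Ai *m D^T *m Ai = - G.
      have := congr1 trmx eG; rewrite [(_ + _)^T]raddfD /= [(rho *: _)^T]linearZ /=.
      by rewrite !trmx_mul sAi mulmxA [(- G)^T]raddfN /= sG.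
    by rewrite /E1 scalerBr mulmxBr mulmxBl addrACA eG -opprD eGT opprK addNr.
  have h0 : \tr (E1^T *m (rho *: E1 + Ai *m E1 *m Ai)) = 0.
    by rewrite hE mulmx0 mxtrace0.
  rewrite mulmxDr -scalemxAr mxtraceD mxtraceZ !mulmxA in h0.
  have q := tr_quad_ge0 E1 C; rewrite -eC in q.
  have q2 := tr_sq_ge0 E1.
  have z : \tr (E1^T *m E1) = 0 by nra.
  have := tr_sq_eq0 z; rewrite /E1 => /eqP; rewrite subr_eq0 => /eqP.
  by move/esym.
have Gn0 : G != 0.
  apply/eqP => G0; apply: nstat; split => //; exists T; split => //.
have Dn0 : D != 0.
  apply/eqP => D0; move: eG; rewrite D0 scaler0 mulmx0 mul0mx add0r => /eqP.
  by rewrite eq_sym oppr_eq0 (negbTE Gn0).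
set L := \tr (Ai *m D) - \tr (Ai *m D *m Ai *m S) + rho * \tr ((A - T)^T *m D).
have Lneg : L < 0.
  have eL : L = \tr (G *m D).
    rewrite /L /G !mulmxDl !mxtraceD -scalemxAl mxtraceZ.
    rewrite [(A - T)^T]raddfB /= sA sT mulmxBl mxtraceD mulNmx.
    rewrite ![\tr (- _)]raddfN /=.
    have c1 : \tr (Ai *m S *m Ai *m D) = \tr (Ai *m D *m Ai *m S).
      by rewrite -(mulmxA (Ai *m S)) mxtrace_mulC mulmxA.
    by rewrite c1.
  have eGD : \tr (G *m D) = - (rho * \tr (D^T *m D)) - \tr (D^T *m (C^T *m C) *m D *m (C^T *m C)).
    rewrite -[G]opprK -eG mulNmx raddfN /= mulmxDl mxtraceD -scalemxAl mxtraceZ opprD Dsym.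
    have c2 : \tr (Ai *m D *m Ai *m D) = \tr (D *m Ai *m D *m Ai).
      by rewrite mxtrace_mulC !mulmxA.
    by rewrite c2 -eC.
  have q := tr_quad_ge0 D C.
  have q2 : 0 < \tr (D^T *m D).
    rewrite lt_def tr_sq_ge0 andbT; apply/eqP => /tr_sq_eq0 /eqP; exact/negP.
  rewrite eL eGD; nra.
have [B [eB uB]] := posdef_decomp pdA.
set Bi := invmx B.
have BiB : Bi *m B = 1%:M by rewrite /Bi mulVmx.
have BBi : B *m Bi = 1%:M by rewrite /Bi mulmxV.
have BtBit : B^T *m Bi^T = 1%:M by rewrite -trmx_mul BiB trmx1.
have eAi : Ai = Bi *m Bi^T.
  rewrite /Ai eB; apply: inv_uniq.
  by rewrite mulmxA -(mulmxA B^T) BBi mulmx1 BtBit.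
set E := Bi^T *m D *m Bi.
set S' := Bi^T *m S *m Bi.
have hBt : forall t, A + t *: D = B^T *m (1%:M + t *: E) *m B.
  move=> t; rewrite mulmxDr mulmx1 mulmxDl -eB /E -scalemxAr -scalemxAl.
  by rewrite !mulmxA BtBit mul1mx -mulmxA BiB mulmx1.
have trE : \tr E = \tr (Ai *m D) by rewrite /E mxtrace_mulC mulmxA -eAi.
have trS' : \tr S' = \tr (Ai *m S) by rewrite /S' mxtrace_mulC mulmxA -eAi.
have trES : \tr (E *m S') = \tr (Ai *m D *m Ai *m S).
  rewrite /E /S' !mulmxA mxtrace_mulC !mulmxA -eAi.
  by rewrite -(mulmxA (Ai *m D) Bi) -eAi.
have hAval : hrho k rho S A = fobj S A + rho / 2 * frob2 (A - T).
  by rewrite /hrho (distC_eq projT) frob_sq.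
have hle : forall t, hrho k rho S (A + t *: D) <=
    fobj S (A + t *: D) + rho / 2 * frob2 (A + t *: D - T).
  move=> t; rewrite /hrho lerD2l; apply: ler_wpM2l.
    by apply: divr_ge0; [exact: ltW | exact: ler0n].
  have h1 := distC_le (A + t *: D) (proj1 projT).
  have h2 := distC_ge0 (A + t *: D) (proj1 projT).
  rewrite -frob_sq; nra.
have hfrob : forall t, frob2 (A + t *: D - T) =
    frob2 (A - T) + 2 * t * \tr ((A - T)^T *m D) + t ^+ 2 * frob2 D.
  by move=> t; rewrite addrAC frob2_expand.
set K' := 1 + Kn E + `|\tr E| + Kc E + 2 * Kn (S' *m E *m E) + rho / 2 * frob2 D.
have KE0 := Kn_ge0 E.
have KS0 := Kn_ge0 (S' *m E *m E).
have KC0 : 0 <= Kc E by apply: sumr_ge0 => i _.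
have F0 := frob2_ge0 D.
have K1 : 1 <= K'.
  rewrite /K'; have := normr_ge0 (\tr E).
  have : 0 <= rho / 2 * frob2 D by apply: mulr_ge0 => //; apply: divr_ge0; [exact: ltW|].
  lra.
set m0 := Num.min (1 / 2 : R) (- L / 2).
have m00 : 0 < m0 by rewrite lt_min; apply/andP; split; lra.
have m01 : m0 <= 1 / 2 by rewrite ge_min lexx.
have m02 : m0 <= - L / 2 by rewrite ge_min lexx orbT.
set N := Num.Def.archi_bound (K' / m0).
have hN : K' / m0 < N%:R.
  apply: archi_boundP; apply: divr_ge0; lra.
exists N => Sgk1.
set t := ((2%:R : R) ^- N).
have tpos : 0 < t by rewrite /t invr_gt0 exprn_gt0.
have tK : t * K' <= m0.
  have h2N : (N%:R : R) <= 2%:R ^+ N.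
    by rewrite -natrX ler_nat ltnW // ltn_expl.
  have : K' < m0 * 2%:R ^+ N.
    rewrite -ltr_pdivrMl //; rewrite mulrC; exact: lt_le_trans hN h2N.
  rewrite /t => h; rewrite mulrC ler_pdivrMr ?exprn_gt0 //; exact: ltW.
have hF : 0 <= rho / 2 * frob2 D.
  by apply: mulr_ge0 => //; apply: divr_ge0; [exact: ltW|].
have tle : forall x, 0 <= x -> x <= K' -> t * x <= m0.
  move=> x _ hx; apply: le_trans tK; apply: ler_wpM2l => //; exact: ltW.
have t1 : t <= 1.
  have := tle 1 ler01 K1; lra.
have tKE : t * Kn E <= 1 / 2.
  have := normr_ge0 (\tr E).
  have := tle (Kn E) KE0; rewrite /K' => h1 h2. apply: le_trans m01; apply: h1; lra.
have [hq uM hZ] := Zlem (ltW tpos) tKE.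
set M := 1%:M + t *: E.
set Z := invmx M.
have pd1 : posdef (A + t *: D).
  split.
    by rewrite [(_ + _)^T]raddfD /= [(t *: D)^T]linearZ /= sA Dsym.
  move=> x xn0; rewrite hBt.
  have -> : (x^T *m (B^T *m M *m B) *m x) 0 0 = bf M (B *m x) (B *m x).
    by rewrite /bf trmx_mul !mulmxA.
  apply: lt_le_trans (hq _).
  have Bxn0 : B *m x != 0.
    apply: contraNneq xn0 => h; by rewrite -(mulKmx uB x) h mulmx0.
  have : sq (B *m x) != 0 by apply: contraNneq Bxn0 => /sq_eq0 ->.
  have := sq_ge0 (B *m x) => h1 h2.
  apply: divr_gt0 => //; by rewrite lt_def h2 h1.
split => //.
have [r [dr hr]] := det_expand E tpos t1.
have dA := det_posdef pdA.
have hdet : \det (A + t *: D) = \det A * \det M.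
  rewrite hBt !det_mulmx det_tr eB det_mulmx det_tr; ring.
have /andP[a1 a2] : - `|\tr E| <= \tr E <= `|\tr E| by rewrite -ler_norml.
move: hr; rewrite ler_norml => /andP[r1 r2].
have y0 : 0 < \det M.
  have h := tle (`|\tr E| + Kc E).
  have : t * (`|\tr E| + Kc E) <= m0.
    apply: h; first by have := normr_ge0 (\tr E); lra.
    by rewrite /K'; have := normr_ge0 (\tr E); lra.
  rewrite dr => h2.
  have : t ^+ 2 * r >= - (t * Kc E).
    have : t * r >= - Kc E by nra.
    rewrite expr2; nra.
  nra.
have hln : ln (\det (A + t *: D)) <= ln (\det A) + (t * \tr E + t ^+ 2 * r).
  rewrite hdet lnM ?posrE // lerD2l.
  have := @le_ln1Dx R (\det M - 1); rewrite addrCA subrr addr0 => h.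
  apply: le_trans (h _) _; first lra.
  rewrite dr; lra.
have MZ : M *m Z = 1%:M by rewrite /Z mulmxV.
have hinv : invmx (A + t *: D) = Bi *m Z *m Bi^T.
  rewrite hBt; apply: inv_uniq.
  rewrite !mulmxA -(mulmxA (B^T *m M) B Bi) BBi mulmx1.
  by rewrite -(mulmxA B^T M Z) MZ mulmx1 BtBit.
have htr : \tr (invmx (A + t *: D) *m S) = \tr (Z *m S').
  rewrite hinv -!mulmxA mxtrace_mulC /S'; by rewrite !mulmxA.
have eZ : Z = 1%:M - t *: (E *m Z).
  move: MZ; rewrite /M mulmxDl mul1mx -scalemxAl => MZ.
  by rewrite -MZ addrK.
have trZ : \tr (Z *m S') = \tr S' - t * \tr (E *m S') + t ^+ 2 * \tr (Z *m (S' *m E *m E)).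
  have e1 : \tr (Z *m S') = \tr S' - t * \tr (E *m Z *m S').
    by rewrite {1}eZ mulmxBl mul1mx -scalemxAl raddfB /= mxtraceZ.
  have e2 : \tr (E *m Z *m S') = \tr (E *m S') - t * \tr (E *m E *m Z *m S').
    by rewrite {1}eZ mulmxBr mulmx1 mulmxBl -scalemxAr -scalemxAl raddfB /= mxtraceZ !mulmxA.
  have e3 : \tr (E *m E *m Z *m S') = \tr (Z *m (S' *m E *m E)).
    by rewrite [RHS]mxtrace_mulC [LHS]mxtrace_mulC !mulmxA.
  rewrite e1 e2 e3; ring.
have hq2 : `|\tr (Z *m (S' *m E *m E))| <= 2 * Kn (S' *m E *m E) := tr_bound _ hZ.
move: hq2; rewrite ler_norml => /andP[q1 q2].
set q := \tr (Z *m (S' *m E *m E)) in trZ q1 q2.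
set X := \tr ((A - T)^T *m D) in hfrob.
set Q := r + q + rho / 2 * frob2 D.
have key : t * Q <= - L / 2.
  apply: le_trans m02.
  apply: le_trans (tle (Kc E + 2 * Kn (S' *m E *m E) + rho / 2 * frob2 D) _ _).
  - apply: ler_wpM2l; [exact: ltW | rewrite /Q; lra].
  - lra.
  - rewrite /K'; have := normr_ge0 (\tr E); lra.
have tL : t * L < 0 by rewrite pmulr_rlt0.
have fin : t * L + t ^+ 2 * Q < 0.
  have : t * (t * Q) <= t * (- L / 2) by apply: ler_wpM2l; [exact: ltW|].
  rewrite expr2; nra.
rewrite /Sgk1; apply: le_lt_trans (hle t) _.
rewrite hAval /fobj hfrob htr trZ trS' trES.
rewrite trE in hln.
have e : t * L + t ^+ 2 * Q = t * \tr (Ai *m D) + t ^+ 2 * r - t * \tr (Ai *m D *m Ai *m S)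
   + t ^+ 2 * q + rho / 2 * (2 * t * X) + rho / 2 * (t ^+ 2 * frob2 D).
  rewrite /L /Q /X; lra.
lra.
Qed.
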